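(* Let $(K,C,S)$ be the associated layered complex of a divided simplicial complex $(K,S^0)$. Suppose that $(K,C,S)$ does not admit an intermediate collapse. If $(K',C',S)$ is obtained from $(K,C,S)$ by a $C$-collapse, then $(K',C',S)$ still does not admit an intermediate collapse.
   Context: A simplicial complex $K$ is a set of finite nonempty sets (simplices) closed under passing to nonempty subsets (faces); $K^0$ is its vertex set; $t<s$ means $t$ is a proper face of $s$. A simplex is principal in $K$ if it is not a proper face of any simplex of $K$; $s$ is free in $K$ if it is a proper face of a principal simplex $p$ and of no other simplex of $K$. A layered simplicial complex is $(K,C,S)$ with $C,S$ disjoint subcomplexes; $\mathrm{IM}(K,C,S)$ denotes simplices in neither $C$ nor $S$. A divided simplicial complex is $(K,S^0)$, $S^0\subseteq K^0$; its associated layered complex has $S$ = simplices with all vertices in $S^0$, $C$ = simplices with all vertices in $K^0-S^0$. An elementary $C$-collapse replaces $(K,C,S)$ by $(K-\{s,p\},C-\{s,p\},S)$ where $p\in C$ is principal in $K$ and $s$ is a face of $p$ free in $K$; a $C$-collapse is a finite sequence of these. $(K,C,S)$ (associated to a divided complex) admits an intermediate collapse if there exist simplices $s,p$ with (i) $p\in\mathrm{IM}(K,C,S)$, (ii) $p$ principal in $K$, (iii) $s$ a face of $p$ free in $K$, (iv) every $t\in S$ with $t<p$ satisfies $t<s$. *)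

(* Defs.v *)
From mathcomp Require Import all_boot.
Set Implicit Arguments. Unset Strict Implicit. Unset Printing Implicit Defensive.

Section Simplicial.
Variable V : finType.
Notation cplx := {set {set V}}.

Definition is_complex (K : cplx) : Prop :=
  set0 \notin K /\
  forall s t : {set V}, s \in K -> t \subset s -> t != set0 -> t \in K.

Definition vertices (K : cplx) : {set V} := \bigcup_(s in K) s.

Definition principal (K : cplx) (p : {set V}) : Prop :=
  p \in K /\ forall q, q \in K -> ~~ (p \proper q).

Definition free (K : cplx) (s : {set V}) : Prop :=
  exists p, [/\ principal K p, s \proper p &
    forall q, q \in K -> s \proper q -> q = p].

(* associated layered complex of the divided complex (K, S0) *)
Definition assocS (K : cplx) (S0 : {set V}) : cplx :=
  [set s in K | s \subset S0].
Definition assocC (K : cplx) (S0 : {set V}) : cplx :=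
  [set s in K | s \subset vertices K :\: S0].

Definition elem_Ccollapse (K C K' C' : cplx) : Prop :=
  exists s p : {set V},
    [/\ p \in C, principal K p, s \subset p, free K s &
        (K' = K :\: [set s; p] /\ C' = C :\: [set s; p])].

Inductive Ccollapse : cplx -> cplx -> cplx -> cplx -> Prop :=
| Ccollapse_refl K C : Ccollapse K C K C
| Ccollapse_step K C K1 C1 K' C' :
    elem_Ccollapse K C K1 C1 -> Ccollapse K1 C1 K' C' -> Ccollapse K C K' C'.

Definition IM (K C S : cplx) : cplx := [set s in K | (s \notin C) && (s \notin S)].

Definition admits_intermediate_collapse (K C S : cplx) : Prop :=
  exists s p : {set V},
    [/\ p \in IM K C S, principal K p, s \subset p, free K s &
        forall t, t \in S -> t \proper p -> t \proper s].

End Simplicial.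

(* Main.v *)
Require Import Defs.
From mathcomp Require Import all_boot.
Set Implicit Arguments. Unset Strict Implicit.

Section Aux.
Variable V : finType.
Notation cplx := {set {set V}}.

Lemma step (K0 K C K1 C1 : cplx) (S0 : {set V}) :
  is_complex K0 -> K \subset K0 ->
  (forall c, c \in C -> c \subset ~: S0) ->
  (forall q, q \in K -> q \subset ~: S0 -> q \in C) ->
  elem_Ccollapse K C K1 C1 ->
  admits_intermediate_collapse K1 C1 (assocS K0 S0) ->
  admits_intermediate_collapse K C (assocS K0 S0).
Proof.
move=> [_ HK0] sKK0 HC1 HC2
  [sg [pi [piC [piK pimax] sgpi _ [-> ->]]]]
  [s [p [pIM [pK1 pmax] sp [p1 [[p1K p1max] sp1 p1u]] Hiv]]].
rewrite inE in pIM; case/and3P: pIM => pK1' pC pS.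
move: pK1'; rewrite in_setD => /andP [pnsp pK].
have piS : pi \subset ~: S0 by apply: HC1.
have inpi : forall X q : {set V}, q \in [set sg; pi] -> X \subset q -> X \subset pi.
  move=> X q; rewrite !inE => /orP [/eqP -> | /eqP ->] HX //.
  exact: subset_trans HX sgpi.
have pnC : p \notin C.
  apply/negP => HpC; move/negP: pC; apply; by rewrite in_setD pnsp HpC.
have [y yp yS0] : exists2 y, y \in p & y \in S0.
  case: (boolP (p \subset ~: S0)) => H.
    by move: pnC; rewrite (HC2 _ pK H).
  case/subsetPn: H => y yp; rewrite inE negbK => ?; by exists y.
have pK0 : p \in K0 by apply: (subsetP sKK0).
have ys : y \in s.
  have Hy : [set y] \proper s.
    apply: Hiv.
      rewrite inE sub1set yS0 andbT; apply: (HK0 p) => //.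
        by rewrite sub1set.
      by apply/set0Pn; exists y; rewrite inE.
    rewrite properEneq sub1set yp andbT; apply/eqP => E.
    move/negP: pS; apply; rewrite inE pK0 /= -E sub1set yS0 //.
  by move/proper_sub: Hy; rewrite sub1set.
have p1p : p1 = p.
  apply/esym/p1u => //; rewrite properEneq sp andbT; apply/eqP => E.
  by move: (pmax _ p1K); rewrite -E sp1.
subst p1.
have pmaxK : forall q, q \in K -> ~~ (p \proper q).
  move=> q qK; case: (boolP (q \in [set sg; pi])) => Hq.
    apply/negP => Hpq.
    have : p \subset ~: S0.
      exact: subset_trans (inpi _ _ Hq (proper_sub Hpq)) piS.
    by move/subsetP/(_ y yp); rewrite inE yS0.
  by apply: pmax; rewrite in_setD Hq qK.
exists s, p; split.
- by rewrite inE pK pnC.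
- by rewrite /principal; split.
- exact: sp.
- exists p; split; [by split | exact: sp1 |].
  move=> q qK sq; case: (boolP (q \in [set sg; pi])) => Hq.
    have : s \subset ~: S0.
      exact: subset_trans (inpi _ _ Hq (proper_sub sq)) piS.
    by move/subsetP/(_ y ys); rewrite inE yS0.
  by apply: p1u => //; rewrite in_setD Hq qK.
- exact: Hiv.
Qed.

Lemma inv_step (K0 K C K1 C1 : cplx) (S0 : {set V}) :
  K \subset K0 ->
  (forall c, c \in C -> c \subset ~: S0) ->
  (forall q, q \in K -> q \subset ~: S0 -> q \in C) ->
  elem_Ccollapse K C K1 C1 ->
  [/\ K1 \subset K0,
      (forall c, c \in C1 -> c \subset ~: S0) &
      (forall q, q \in K1 -> q \subset ~: S0 -> q \in C1)].
Proof.
move=> sKK0 HC1 HC2 [sg [pi [_ _ _ _ [-> ->]]]]; split.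
- apply: subset_trans sKK0; exact: subsetDl.
- by move=> c; rewrite in_setD => /andP [_ /HC1].
- move=> q; rewrite !in_setD => /andP [-> qK] qS /=; exact: HC2.
Qed.

Lemma chain (K0 : cplx) (S0 : {set V}) K C K' C' :
  Ccollapse K C K' C' -> is_complex K0 -> K \subset K0 ->
  (forall c, c \in C -> c \subset ~: S0) ->
  (forall q, q \in K -> q \subset ~: S0 -> q \in C) ->
  ~ admits_intermediate_collapse K C (assocS K0 S0) ->
  ~ admits_intermediate_collapse K' C' (assocS K0 S0).
Proof.
elim=> {K C K' C'} // K C K1 C1 K' C' He _ IH HK0 sKK0 HC1 HC2 Hn.
have [s1 h1 h2] := inv_step sKK0 HC1 HC2 He.
apply: IH => // Ha; apply: Hn; exact: (step HK0 sKK0 HC1 HC2 He Ha).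
Qed.

End Aux.

Theorem proposition4p17 (V : finType) (K : {set {set V}}) (S0 : {set V}) :
  is_complex K -> S0 \subset vertices K ->
  ~ admits_intermediate_collapse K (assocC K S0) (assocS K S0) ->
  forall K' C' : {set {set V}},
    Ccollapse K (assocC K S0) K' C' ->
    ~ admits_intermediate_collapse K' C' (assocS K S0).
Proof.
move=> HK _ Hn K' C' Hc.
apply: (chain Hc HK (subxx _) _ _ Hn).
- move=> c; rewrite inE => /andP [_ H]; apply: subset_trans H _.
  by apply/subsetP => x; rewrite !inE => /andP [].
- move=> q qK qS; rewrite inE qK /=; apply/subsetP => x xq.
  rewrite !inE; move/subsetP: qS => /(_ x xq); rewrite inE => ->.
  by apply/bigcupP; exists q.
Qed.
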